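(* Let $h$ be a linear functional and $\lambda\in\mathbb R$ such that $\operatorname{conv}(\frac12(d+\mathcal W))$ lies in the open half-space $\{\bar x:h(\bar x)<\lambda\}$. Then there is at most one element of $\mathcal C$ in $\{\bar x:h(\bar x)>\lambda\}$, and such an element is a null vertex of $\operatorname{conv}(\mathcal C)$. Consequently any element of $\mathcal C$ outside $\operatorname{conv}(\frac12(d+\mathcal W))$ is a null vertex of $\operatorname{conv}(\mathcal C)$.
   Context: Setting: $G$ compact Lie group, $K\subset G$ closed, $G/K$ connected almost effective, isotropy representation $\mathfrak p=\mathfrak p_1\oplus\cdots\oplus\mathfrak p_r$ ($r\ge2$) with pairwise inequivalent $\mathbb R$-irreducible summands, $d_i=\dim\mathfrak p_i$, $d=(d_1,\dots,d_r)$, $n=\sum d_i$. The scalar curvature of the metric $e^{q_i}Q$ on $\mathfrak p_i$ is $S(q)=\sum_{w\in\mathcal W}A_we^{w\cdot q}$, $\mathcal W\subset\mathbb Z^r$ finite, $A_w\ne0$, each $w$ of type I (one entry $-1$), type II (one entry $1$, two entries $-1$) or type III (one entry $1$, one entry $-2$), other entries $0$; $A_w>0$ for type I and $<0$ otherwise. Assume $\dim\operatorname{conv}(\mathcal W)=r-1$. $J$ is the symmetric bilinear form on $\mathbb R^r$ with $J(p,p)=\frac1{n-1}(\sum p_i)^2-\sum p_i^2/d_i$; a vector $\bar x$ is null if $J(\bar x,\bar x)=0$. $u=\sum_{\bar c\in\mathcal C}F_{\bar c}e^{\bar c\cdot q}$ ($\mathcal C$ finite, $F_{\bar c}\ne0$)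 is a superpotential: for every $\xi$, $\sum_{(\bar a,\bar c)\in\mathcal C^2,\ \bar a+\bar c=\xi}J(\bar a,\bar c)F_{\bar a}F_{\bar c}$ equals $A_w$ if $\xi=d+w$, $w\in\mathcal W$, and $0$ otherwise. Normalise (by subtracting a constant from $u$) so that $\mathcal C$ lies in the hyperplane $\mathcal H=\{\bar x:\sum\bar x_i=\frac12(n-1)\}$, which also contains $\frac12(d+\mathcal W)$. *)

(* Defs.v *)
From HB Require Import structures.
From mathcomp Require Import all_boot all_order all_algebra.
Set Implicit Arguments. Unset Strict Implicit. Unset Printing Implicit Defensive.
Import Order.TTheory GRing.Theory Num.Theory.
Local Open Scope ring_scope.

Section Defs.
Variables (R : realFieldType) (r : nat).
Implicit Types (x y w : 'rV[R]_r) (S : seq 'rV[R]_r).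

Definition dvec (d : 'I_r -> nat) : 'rV[R]_r := \row_i (d i)%:R.

Definition ndim (d : 'I_r -> nat) : nat := (\sum_i d i)%N.

Definition csum x : R := \sum_i x 0 i.

Definition Jform (d : 'I_r -> nat) x y : R :=
  csum x * csum y / ((ndim d)%:R - 1) - \sum_i x 0 i * y 0 i / (d i)%:R.

Definition is_null (d : 'I_r -> nat) x : Prop := Jform d x x = 0.

Definition lin (hv : 'rV[R]_r) x : R := \sum_i hv 0 i * x 0 i.

Definition in_conv S x : Prop :=
  exists mu : 'rV[R]_r -> R, (forall y, 0 <= mu y) /\
    \sum_(y <- S) mu y = 1 /\ x = \sum_(y <- S) mu y *: y.

Definition is_vertex S x : Prop :=
  in_conv S x /\
  forall y z (t : R), in_conv S y -> in_conv S z -> 0 < t < 1 ->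
    x = t *: y + (1 - t) *: z -> y = x /\ z = x.

Definition typeI w : Prop :=
  exists i, w 0 i = -1 /\ forall j, j != i -> w 0 j = 0.
Definition typeII w : Prop :=
  exists i j k, [/\ i != j, i != k & j != k] /\
    [/\ w 0 i = 1, w 0 j = -1 & w 0 k = -1] /\
    forall l, l != i -> l != j -> l != k -> w 0 l = 0.
Definition typeIII w : Prop :=
  exists i j, i != j /\ w 0 i = 1 /\ w 0 j = -2 /\
    forall l, l != i -> l != j -> w 0 l = 0.

Definition conv_dim S (k : nat) : Prop :=
  S != [::] /\ \rank (\matrix_(i < size S, j < r) (S`_i - S`_0) 0 j) = k.

Definition halfDW (d : 'I_r -> nat) S : seq 'rV[R]_r :=
  [seq 2^-1 *: (dvec d + w) | w <- S].

End Defs.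

(* Main.v *)
Require Import Defs.
From HB Require Import structures.
From mathcomp Require Import all_boot all_order all_algebra.
From mathcomp.algebra_tactics Require Import ring lra.
Import Order.TTheory GRing.Theory Num.Theory.
Local Open Scope ring_scope.
Set Implicit Arguments. Unset Strict Implicit. Unset Printing Implicit Defensive.

Section Lin.
Variables (R : realFieldType) (r : nat).
Implicit Types (x y z hv g : 'rV[R]_r).

Lemma linD hv x y : lin hv (x + y) = lin hv x + lin hv y.
Proof. by rewrite /lin -big_split /=; apply: eq_bigr => i _; rewrite mxE mulrDr. Qed.
Lemma linZ hv a x : lin hv (a *: x) = a * lin hv x.
Proof. by rewrite /lin mulr_sumr; apply: eq_bigr => i _; rewrite mxE mulrCA. Qed.
Lemma lin0 hv : lin hv 0 = 0.
Proof. by rewrite /lin big1 // => i _; rewrite mxE mulr0. Qed.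
Lemma linN hv x : lin hv (- x) = - lin hv x.
Proof. by rewrite -scaleN1r linZ mulN1r. Qed.
Lemma linB hv x y : lin hv (x - y) = lin hv x - lin hv y.
Proof. by rewrite linD linN. Qed.
Lemma linDl g hv x : lin (g + hv) x = lin g x + lin hv x.
Proof. by rewrite /lin -big_split /=; apply: eq_bigr => i _; rewrite mxE mulrDl. Qed.
Lemma linZl a hv x : lin (a *: hv) x = a * lin hv x.
Proof. by rewrite /lin mulr_sumr; apply: eq_bigr => i _; rewrite mxE mulrA. Qed.
Lemma linNl hv x : lin (- hv) x = - lin hv x.
Proof. by rewrite -scaleN1r linZl mulN1r. Qed.
Lemma lin_sum I (s : seq I) (P : pred I) (F : I -> 'rV[R]_r) hv :
  lin hv (\sum_(i <- s | P i) F i) = \sum_(i <- s | P i) lin hv (F i).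
Proof.
elim/big_rec2: _ => [|i y1 y2 _ <-]; first exact: lin0.
by rewrite linD.
Qed.
Lemma lin_self_lt0 x : x != 0 -> lin (- x) x < 0.
Proof.
move=> nx; rewrite linNl oppr_lt0 /lin.
have sq : forall a : R, 0 <= a * a by move=> a; rewrite -expr2 sqr_ge0.
rewrite lt0r sumr_ge0 ?andbT => [|i _]; last exact: sq.
apply/negP => /eqP/psumr_eq0P H.
apply/negP: nx; rewrite negbK; apply/eqP/rowP => i.
have := H (fun j _ => sq (x 0 j)) i isT.
by rewrite mxE; move/eqP; rewrite mulf_eq0 orbb => /eqP.
Qed.

Lemma le_sum_mem (T : eqType) (s : seq T) (F : T -> R) u :
  u \in s -> (forall t, t \in s -> 0 <= F t) -> F u <= \sum_(t <- s) F t.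
Proof.
elim: s => [//|a s IH]; rewrite inE big_cons => /orP [/eqP->|us] H.
  rewrite lerDl big_seq sumr_ge0 // => t ts; apply: H; by rewrite inE ts orbT.
rewrite ler_wpDl ?H ?inE ?eqxx //; apply: IH => // t ts; apply: H; by rewrite inE ts orbT.
Qed.

Definition gordan_stmt (L : seq 'rV[R]_r) :=
  (exists h, forall v, v \in L -> lin h v < 0) \/
  (exists mu : nat -> R, (forall i, 0 <= mu i) /\
     \sum_(0 <= i < size L) mu i *: L`_i = 0 /\ 0 < \sum_(0 <= i < size L) mu i).

Lemma gordan_n n : forall L : seq 'rV[R]_r, size L = n -> gordan_stmt L.
Proof.
elim: n => [|n IH] [|v L'] //= => [_|[sL]].
  by left; exists 0.
have [eL0|[u0 [L'' eL]]] : L' = [::] \/ exists u0 L'', L' = u0 :: L''.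
  by case: (L') => [|a l]; [left|right; exists a, l].
  rewrite eL0 /gordan_stmt.
  have [v0|nv0] := eqVneq v 0.
    right; exists (fun i => (i == 0)%:R); split=> [i|]; first by case: (i == 0).
    by rewrite /= big_nat1 /= v0 scaler0; split=> //; rewrite big_nat1 ltr01.
  by left; exists (- v) => x; rewrite inE => /eqP->; apply: lin_self_lt0.
case: (IH L' sL) => [[h Hh]|[mu [mu0 [musum mupos]]]]; last first.
  right; exists (fun i => if i is j.+1 then mu j else 0); split=> [[|i]//|].
  by rewrite /= !big_nat_recl //= scale0r !add0r musum.
rewrite /gordan_stmt. have [hv|hv] := ltrP (lin h v) 0.
  by left; exists h => x; rewrite inE => /orP [/eqP->//|]; apply: Hh.
set p := lin h v.
set w := [seq p *: u - lin h u *: v | u <- L'].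
case: (IH w); first by rewrite size_map.
  move=> [g Hg].
  have Hg' u : u \in L' -> p * lin g u - lin h u * lin g v < 0.
    move=> uL; have := Hg (p *: u - lin h u *: v).
    by rewrite linB !linZ; apply; apply/mapP; exists u.
  have [p0|pn0] := eqVneq p 0.
    have gv : lin g v < 0.
      have := Hg' u0; rewrite p0 mul0r sub0r oppr_lt0 eL inE eqxx => /(_ isT).
      have : lin h u0 < 0 by apply: Hh; rewrite eL inE eqxx.
      move=> a b; nra.
    set K := 1 + \sum_(u <- L') `|lin g u| / (- lin h u).
    left; exists (g + K *: h) => x; rewrite inE => /orP [/eqP->|xL].
      by rewrite linDl linZl -/p p0 mulr0 addr0.
    rewrite linDl linZl.
    have hx : lin h x < 0 by apply: Hh.
    have Kt : 1 + `|lin g x| / (- lin h x) <= K.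
      rewrite lerD2l; apply: (le_sum_mem (F := fun u => `|lin g u| / (- lin h u))) => // y yL.
      by rewrite divr_ge0 // oppr_ge0 ltW // Hh.
    have tE : `|lin g x| / (- lin h x) * (- lin h x) = `|lin g x|.
      by rewrite divfK // oppr_eq0 lt_eqF.
    have := ler_norm (lin g x).
    move: Kt tE hx; set t := `|lin g x| / _; set a := `|lin g x|.
    move=> *; nra.
  have pp : 0 < p by rewrite lt_def pn0 hv.
  set lam := 1 + \sum_(u <- L') (p * lin h u) / (p * lin g u - lin h u * lin g v).
  left; exists (lam *: g - (lam * lin g v / p + 1) *: h) => x.
  rewrite inE => /orP [/eqP->|xL].
    rewrite linDl linNl !linZl -/p.
    have -> : lam * lin g v - (lam * lin g v / p + 1) * p = - p by field.
    by rewrite oppr_lt0.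
  rewrite linDl linNl !linZl.
  have hx : lin h x < 0 by apply: Hh.
  have Wx := Hg' x xL.
  have lt : (p * lin h x) / (p * lin g x - lin h x * lin g v) < lam.
    have H0 : forall y, y \in L' -> 0 <= (p * lin h y) / (p * lin g y - lin h y * lin g v).
      by move=> y yL; rewrite ler_ndivlMr ?Hg' // mul0r pmulr_rle0 // ltW // Hh.
    have := le_sum_mem (F := fun u => (p * lin h u) / (p * lin g u - lin h u * lin g v)) xL H0.
    rewrite /lam /=; lra.
  rewrite ltr_ndivrMr // in lt.
  have -> : lam * lin g x - (lam * lin g v / p + 1) * lin h x =
     (lam * (p * lin g x - lin h x * lin g v) - p * lin h x) / p by field.
  by rewrite pmulr_llt0 ?invr_gt0 // subr_lt0.
move=> [mu [mu0 [musum mupos]]].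
rewrite size_map in musum mupos.
have wE i : (i < size L')%N -> w`_i = p *: L'`_i - lin h L'`_i *: v.
  by move=> iL; rewrite (nth_map 0).
have hneg j : (j < size L')%N -> lin h L'`_j < 0 by move=> jL; apply: Hh; rewrite mem_nth.
set m0 := \sum_(0 <= j < size L') mu j * (- lin h L'`_j).
have tnn j : 0 <= mu j * (- lin h L'`_j).
  case: (ltnP j (size L')) => jL.
    by rewrite mulr_ge0 // oppr_ge0 ltW // hneg.
  by rewrite nth_default // lin0 oppr0 mulr0.
have m0pos : 0 < m0.
  rewrite lt_def sumr_ge0 ?andbT //.
  apply/negP => /eqP m00.
  move: mupos; rewrite big_nat_cond big1 ?ltxx // => j /andP [/andP [_ jL] _].
  move/eqP: m00; rewrite /m0 psumr_eq0; last by move=> i _; apply: tnn.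
  move=> /allP /(_ j); rewrite mem_index_iota jL => /(_ isT) /eqP.
  move=> /eqP; by rewrite mulf_eq0 oppr_eq0 (lt_eqF (hneg _ jL)) orbF => /eqP.
right; exists (fun i => if i is j.+1 then p * mu j else m0); split.
  by case=> [|i]; [apply: ltW|apply: mulr_ge0; [apply: hv|]].
rewrite /= !big_nat_recl //=; split; last first.
  by rewrite -mulr_sumr ltr_pwDl // mulr_ge0 // sumr_ge0.
rewrite (eq_big_nat _ _ (F2 := fun i => mu i *: (p *: L'`_i - lin h L'`_i *: v))) in musum; last first.
  by move=> i /andP [_ iL]; rewrite wE.
apply: (etrans _ musum); symmetry; rewrite (eq_bigr (fun i => (p * mu i) *: L'`_i + (mu i * - lin h L'`_i) *: v)); last first.
  by move=> i _; rewrite scalerBr !scalerA mulrC -scaleNr mulrN.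
by rewrite big_split /= addrC /m0 scaler_suml.
Qed.

Lemma lin_conv S hv y : in_conv S y -> exists mu : 'rV[R]_r -> R,
  (forall z, 0 <= mu z) /\ \sum_(z <- S) mu z = 1 /\ lin hv y = \sum_(z <- S) mu z * lin hv z.
Proof.
move=> [mu [mu0 [mu1 ->]]]; exists mu; do 2!split => //.
by rewrite lin_sum; apply: eq_bigr => z _; rewrite linZ.
Qed.

Lemma fin_max (T : eqType) (s : seq T) (f : T -> R) t :
  (forall b, b \in s -> f b < t) -> exists m, m < t /\ forall b, b \in s -> f b <= m.
Proof.
elim: s => [|a s IH] H.
  by exists (t - 1); split => //; rewrite ltrBlDr ltrDl ltr01.
have [m [mt Hm]] : exists m, m < t /\ forall b, b \in s -> f b <= m.
  by apply: IH => b bs; apply: H; rewrite inE bs orbT.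
exists (Num.max (f a) m); split.
  by rewrite gt_max mt H // inE eqxx.
move=> b; rewrite inE => /orP [/eqP->|ys]; first by rewrite le_max lexx.
by rewrite le_max Hm ?orbT.
Qed.

Lemma separate S x : uniq S -> ~ in_conv S x ->
  exists hv lam, (forall y, in_conv S y -> lin hv y < lam) /\ lam < lin hv x.
Proof.
move=> uS nx.
case: (@gordan_n (size S) [seq y - x | y <- S]); first by rewrite size_map.
  move=> [h Hh].
  have Hy : forall y, y \in S -> lin h y < lin h x.
    move=> y yS; rewrite -subr_lt0 -linB; apply: Hh; apply/mapP; by exists y.
  have [m [mt Hm]] := fin_max Hy.
  exists h, ((m + lin h x) / 2); split; last by lra.
  move=> y /(lin_conv h) [mu [mu0 [mu1 ->]]].
  have : \sum_(z <- S) mu z * lin h z <= \sum_(z <- S) mu z * m.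
    by rewrite big_seq_cond [X in _ <= X]big_seq_cond; apply: ler_sum => z /andP [zS _]; rewrite ler_wpM2l ?Hm.
  rewrite -mulr_suml mu1 mul1r; lra.
move=> [mu [mu0 [musum mupos]]]; exfalso; apply: nx.
rewrite size_map in musum mupos.
set M := \sum_(0 <= i < size S) mu i in mupos.
have M0 : M != 0 by rewrite gt_eqF.
exists (fun z => if z \in S then mu (index z S) / M else 0); split.
  by move=> z; case: ifP => // _; rewrite divr_ge0 // ltW.
have bE (F : 'rV[R]_r -> 'rV[R]_r) :
  \sum_(z <- S) (if z \in S then mu (index z S) / M else 0) *: F z =
  \sum_(0 <= i < size S) (mu i / M) *: F S`_i.
  rewrite (big_nth 0); apply: eq_big_nat => i /andP [_ iS].
  by rewrite mem_nth // index_uniq.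
split.
  rewrite (big_nth 0) (eq_big_nat _ _ (F2 := fun i => mu i / M)); last first.
    by move=> i /andP [_ iS]; rewrite mem_nth // index_uniq.
  by rewrite -mulr_suml divff.
rewrite bE.
have : \sum_(0 <= i < size S) mu i *: S`_i - M *: x = 0.
  rewrite /M scaler_suml -sumrB; apply: (etrans _ musum); apply: eq_big_nat => i /andP [_ iS].
  by rewrite (nth_map 0) // scalerBr.
move/eqP; rewrite subr_eq0 => /eqP E.
apply: (scalerI M0); rewrite -E scaler_sumr; apply: eq_bigr => i _.
by rewrite scalerA mulrC divfK.
Qed.

Fixpoint llt (fs : seq 'rV[R]_r) a b : bool :=
  if fs is f :: fs' then (lin f a < lin f b) || ((lin f a == lin f b) && llt fs' a b)
  else false.

Lemma llt_irr fs a : llt fs a a = false.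
Proof. by elim: fs => //= f fs ->; rewrite ltxx eqxx. Qed.

Lemma llt_trans fs a b c : llt fs a b -> llt fs b c -> llt fs a c.
Proof.
elim: fs => //= f fs IH /orP [ab|/andP [/eqP ab h1]] /orP [bc|/andP [/eqP bc h2]].
- by rewrite (lt_trans ab bc).
- by rewrite -bc ab.
- by rewrite ab bc.
- by rewrite ab bc eqxx (IH h1 h2) orbT.
Qed.

Lemma lltD fs a b c e : llt fs a b -> (c = e) \/ llt fs c e -> llt fs (a + c) (b + e).
Proof.
move=> h [->|]; elim: fs h => //= f fs IH.
  by rewrite !linD ltrD2r (inj_eq (addIr _)) => /orP [->//|/andP [-> /IH ->]]; rewrite orbT.
move=> /orP [ab|/andP [/eqP ab h1]] /orP [ce|/andP [/eqP ce h2]]; rewrite !linD.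
- by rewrite ltrD.
- by rewrite ce ltrD2r ab.
- by rewrite ab ltrD2l ce.
- by rewrite ab ce ltxx eqxx (IH h1 h2).
Qed.

Lemma llt_total fs a b : [|| llt fs a b, llt fs b a | all (fun f => lin f a == lin f b) fs].
Proof.
elim: fs => //= f fs IH.
case: (ltgtP (lin f a) (lin f b)) => //= ->; by rewrite eqxx.
Qed.

Lemma llt_head f fs a b : llt (f :: fs) a b -> lin f a <= lin f b.
Proof. by move=> /orP [/ltW //|/andP [/eqP -> _]]. Qed.

Lemma lin_delta i x : lin (delta_mx 0 i) x = x 0 i.
Proof.
rewrite /lin (bigD1 i) //= big1 ?addr0 => [|j ji]; first by rewrite mxE !eqxx mul1r.
by rewrite mxE (negbTE ji) andbF mul0r.
Qed.

Definition keyfs hv : seq 'rV[R]_r := hv :: [seq delta_mx 0 i | i <- enum 'I_r].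

Lemma key_total hv a b : a != b -> llt (keyfs hv) a b || llt (keyfs hv) b a.
Proof.
move=> ab; have := llt_total (keyfs hv) a b; case/or3P => [->|->|] //; first by rewrite orbT.
move=> /allP H; case/eqP: ab; apply/rowP => i.
rewrite -!lin_delta; apply/eqP/H; rewrite inE; apply/orP; right.
by apply/mapP; exists i => //; rewrite mem_enum.
Qed.

Lemma llt_max fs (L : seq 'rV[R]_r) :
  (forall a b, a != b -> llt fs a b || llt fs b a) -> L != [::] ->
  exists m, m \in L /\ forall a, a \in L -> a != m -> llt fs a m.
Proof.
move=> tot; elim: L => [//|x L IH] _.
have [->|nL] := eqVneq L [::].
  by exists x; split=> [|a]; rewrite ?inE ?eqxx // => /eqP ->; rewrite eqxx.
have [m [mL Hm]] := IH nL.
have [xm|xm] := eqVneq x m.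
  exists m; split; first by rewrite inE mL orbT.
  by move=> a; rewrite inE => /orP [/eqP ->|]; [rewrite xm eqxx|apply: Hm].
case/orP: (tot _ _ xm) => h.
  exists m; split; first by rewrite inE mL orbT.
  by move=> a; rewrite inE => /orP [/eqP ->//|]; apply: Hm.
exists x; split; first by rewrite inE eqxx.
move=> a; rewrite inE => /orP [/eqP ->|aL ax]; first by rewrite eqxx.
have [am|am] := eqVneq a m; first by rewrite am.
exact: llt_trans (Hm _ aL am) h.
Qed.

Lemma sum_one (V : nmodType) (T : eqType) (S : seq T) (f : T -> V) c :
  uniq S -> c \in S -> (forall a, a \in S -> a != c -> f a = 0) ->
  \sum_(a <- S) f a = f c.
Proof.
move=> uS cS H; rewrite (bigD1_seq c) //= big1_seq ?addr0 // => a /andP [ac aS].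
exact: H.
Qed.

Lemma sum_two (V : nmodType) (T : eqType) (S : seq T) (f : T -> V) c c' :
  uniq S -> c \in S -> c' \in S -> c != c' ->
  (forall a, a \in S -> a != c -> a != c' -> f a = 0) ->
  \sum_(a <- S) f a = f c + f c'.
Proof.
move=> uS cS c'S cc H.
rewrite (eq_bigr (fun a => (if a == c then f a else 0) + (if a == c then 0 else f a)));
  last by move=> a _; case: (a == c); rewrite ?addr0 ?add0r.
rewrite big_split /= (sum_one (c := c)) // ?eqxx; last by move=> a _ /negbTE ->.
rewrite (sum_one (c := c')) // ?(negbTE cc) 1?eq_sym ?(negbTE cc) //.
by move=> a aS ac'; case: eqP => // /eqP ac; apply: H.
Qed.

Lemma inner_sum (S : seq 'rV[R]_r) (G : 'rV[R]_r -> R) a xi : uniq S ->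
  \sum_(b <- S | a + b == xi) G b = if xi - a \in S then G (xi - a) else 0.
Proof.
move=> uS; rewrite (eq_bigl (fun b => b == xi - a)); last first.
  by move=> b /=; rewrite [RHS]eq_sym subr_eq addrC.
case: ifP => xS.
  rewrite big_mkcond /= (sum_one (c := xi - a)) ?eqxx //.
  by move=> b _ /negbTE ->.
by rewrite big1_seq // => b /andP [/eqP -> ]; rewrite xS.
Qed.

Lemma in_conv_mem (S : seq 'rV[R]_r) y : uniq S -> y \in S -> in_conv S y.
Proof.
move=> uS yS; exists (fun z => (z == y)%:R); split; first by move=> z; case: (z == y).
split.
  by rewrite (sum_one (c := y)) ?eqxx // => a _ /negbTE ->.
by rewrite (sum_one (c := y)) ?eqxx ?scale1r // => a _ /negbTE ->; rewrite scale0r.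
Qed.

Lemma csumD x y : csum (x + y) = csum x + csum y.
Proof. by rewrite /csum -big_split; apply: eq_bigr => i _; rewrite mxE. Qed.
Lemma csumN x : csum (- x) = - csum x.
Proof. by rewrite /csum -sumrN; apply: eq_bigr => i _; rewrite mxE. Qed.

Lemma JformD d x y z : Jform d x (y + z) = Jform d x y + Jform d x z.
Proof.
rewrite /Jform csumD (eq_bigr (fun i => x 0 i * y 0 i / (d i)%:R + x 0 i * z 0 i / (d i)%:R)).
  by rewrite big_split /=; ring.
by move=> i _; rewrite mxE; ring.
Qed.
Lemma JformN d x y : Jform d x (- y) = - Jform d x y.
Proof.
rewrite /Jform csumN (eq_bigr (fun i => - (x 0 i * y 0 i / (d i)%:R))).
  by rewrite sumrN; ring.
by move=> i _; rewrite mxE; ring.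
Qed.
Lemma JformC d x y : Jform d x y = Jform d y x.
Proof.
rewrite /Jform [csum x * _]mulrC; congr (_ - _); apply: eq_bigr => i _; by rewrite [x 0 i * _]mulrC.
Qed.

Lemma null_eq d x y : (forall i, (0 < d i)%N) -> csum x = csum y ->
  Jform d x x = 0 -> Jform d y y = 0 -> Jform d x y = 0 -> x = y.
Proof.
move=> dp sxy; rewrite /Jform -sxy.
set N := _ / _.
set A := \sum_i _; set B := \sum_i _; set X := \sum_i _ => hA hB hX.
have E : \sum_i (x 0 i - y 0 i) * (x 0 i - y 0 i) / (d i)%:R = A + B - (X + X).
  rewrite /A /B /X -!big_split -sumrB /=; apply: eq_bigr => i _.
  by rewrite mulrC [y 0 i * _]mulrC; ring.
have E0 : \sum_i (x 0 i - y 0 i) * (x 0 i - y 0 i) / (d i)%:R = 0 by rewrite E; lra.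
have nn i : 0 <= (x 0 i - y 0 i) * (x 0 i - y 0 i) / (d i)%:R.
  by rewrite divr_ge0 // -expr2 sqr_ge0.
apply/rowP => i; have := psumr_eq0P (fun j _ => nn j) E0 (i := i) isT.
move/eqP; rewrite mulf_eq0 invr_eq0 pnatr_eq0 (negbTE (lt0n_neq0 (dp i))) orbF mulf_eq0 orbb subr_eq0.
by move/eqP.
Qed.

Lemma conv_top (C : seq 'rV[R]_r) hv c y : uniq C -> c \in C ->
  (forall a, a \in C -> a != c -> lin hv a < lin hv c) -> in_conv C y ->
  lin hv y <= lin hv c /\ (lin hv y = lin hv c -> y = c).
Proof.
move=> uC cC H [mu [mu0 [mu1 ye]]].
have nn : forall a, a \in C -> 0 <= mu a * (lin hv c - lin hv a).
  move=> a aC; rewrite mulr_ge0 // subr_ge0.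
  by have [->//|ac] := eqVneq a c; rewrite ltW // H.
have D : lin hv c - lin hv y = \sum_(a <- C) mu a * (lin hv c - lin hv a).
  rewrite ye lin_sum (eq_bigr (fun a => mu a * lin hv a)) => [|a _]; last by rewrite linZ.
  rewrite -[lin hv c in LHS]mul1r -mu1 mulr_suml -sumrB; apply: eq_bigr => a _; ring.
split.
  by rewrite -subr_ge0 D big_seq sumr_ge0 // => a; apply: nn.
move=> E; move: D; rewrite E subrr => /esym/eqP.
rewrite big_seq psumr_eq0 // => /allP Hall.
have m0 : forall a, a \in C -> a != c -> mu a = 0.
  move=> a aC ac; have := Hall a aC; rewrite aC /= mulf_eq0 subr_eq0.
  by rewrite (gt_eqF (H _ aC ac)) orbF => /eqP.
have mc : mu c = 1 by rewrite -mu1 (sum_one (c := c)).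
rewrite ye (sum_one (c := c)) ?mc ?scale1r // => a aC ac.
by rewrite m0 // scale0r.
Qed.

Lemma vertex_of (C : seq 'rV[R]_r) hv c : uniq C -> c \in C ->
  (forall a, a \in C -> a != c -> lin hv a < lin hv c) -> is_vertex C c.
Proof.
move=> uC cC H; split; first exact: in_conv_mem.
move=> y z t cy cz /andP [t0 t1] E.
have [ly ey] := conv_top uC cC H cy.
have [lz ez] := conv_top uC cC H cz.
have L : lin hv c = t * lin hv y + (1 - t) * lin hv z.
  by rewrite {1}E linD !linZ.
have Ly : lin hv y = lin hv c by nra.
have Lz : lin hv z = lin hv c by nra.
by split; [apply: ey|apply: ez].
Qed.

Lemma halfDW_uniq d (W : seq 'rV[R]_r) : uniq W -> uniq (halfDW d W).
Proof.
move=> uW; rewrite map_inj_uniq // => w1 w2.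
have h2 : (2:R)^-1 != 0 by rewrite invr_eq0 pnatr_eq0.
by move=> /(scalerI h2) /addrI.
Qed.

Lemma part1 (d : 'I_r -> nat) (W : seq 'rV[R]_r) (A : 'rV[R]_r -> R)
    (C : seq 'rV[R]_r) (F : 'rV[R]_r -> R) hv lam :
  (forall i, (0 < d i)%N) -> uniq W -> uniq C ->
  (forall c, c \in C -> F c != 0) ->
  (forall xi : 'rV[R]_r,
     \sum_(a <- C) \sum_(c <- C | a + c == xi) Jform d a c * F a * F c =
     (if xi - dvec R d \in W then A (xi - dvec R d) else 0)) ->
  (forall c, c \in C -> csum c = ((ndim d)%:R - 1) / 2) ->
  (forall x, in_conv (halfDW d W) x -> lin hv x < lam) ->
  forall c, c \in C -> lam < lin hv c ->
  (forall c', c' \in C -> lam < lin hv c' -> c' = c) /\ is_null d c /\ is_vertex C c.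
Proof.
move=> dp uW uC Fn HS Hs H c cC cl.
have tot := key_total hv.
have Cn : C != [::] by case: (C) cC.
have [c1 [c1C Hc1]] := llt_max tot Cn.
have lmax a : a \in C -> lin hv a <= lin hv c1.
  move=> aC; have [->//|ac] := eqVneq a c1.
  exact: llt_head (Hc1 _ aC ac).
have Q0 xi : lam * 2 < lin hv xi ->
    \sum_(a <- C) \sum_(b <- C | a + b == xi) Jform d a b * F a * F b = 0.
  move=> xl; rewrite HS; case: ifP => // inW; exfalso.
  have hm : 2^-1 *: xi \in halfDW d W.
    by apply/mapP; exists (xi - dvec R d) => //; rewrite addrC subrK.
  have := H (2^-1 *: xi) (in_conv_mem (halfDW_uniq d uW) hm).
  rewrite linZ; have h2 : (2:R)^-1 * 2 = 1 by rewrite mulVf // pnatr_eq0.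
  move=> hl; nra.
have Qf xi : \sum_(a <- C) \sum_(b <- C | a + b == xi) Jform d a b * F a * F b =
    \sum_(a <- C) (if xi - a \in C then Jform d a (xi - a) * F a * F (xi - a) else 0).
  by apply: eq_bigr => a _; rewrite (@inner_sum C (fun b => Jform d a b * F a * F b) a xi uC).
have FF a b : a \in C -> b \in C -> Jform d a b * F a * F b = 0 -> Jform d a b = 0.
  by move=> aC bC /eqP; rewrite !mulf_eq0 (negbTE (Fn _ aC)) (negbTE (Fn _ bC)) !orbF => /eqP.
have c1l : lam < lin hv c1 by apply: lt_le_trans cl (lmax _ cC).
have N1 : Jform d c1 c1 = 0.
  have := Q0 (c1 + c1); rewrite linD Qf (sum_one (c := c1)) //.
  - by rewrite addrK c1C => h; apply: FF => //; apply: h; lra.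
  - move=> a aC ac; case: ifP => // bC; exfalso.
    have h1 := Hc1 _ aC ac.
    have h2 : (c1 + c1 - a = c1) \/ llt (keyfs hv) (c1 + c1 - a) c1.
      by have [->|ne] := eqVneq (c1 + c1 - a) c1; [left|right; apply: Hc1].
    by have := lltD h1 h2; rewrite addrC subrK llt_irr.
have U : forall c', c' \in C -> lam < lin hv c' -> c' = c1.
  move=> c' c'C c'l; apply/eqP; apply: contraT => nc'.
  set C2 := [seq a <- C | a != c1].
  have c'C2 : c' \in C2 by rewrite mem_filter nc'.
  have C2n : C2 != [::] by case: (C2) c'C2.
  have [c2 [c2C2 Hc2]] := llt_max tot C2n.
  move: (c2C2); rewrite mem_filter => /andP [c21 c2C].
  have c2l : lam < lin hv c2.
    apply: lt_le_trans c'l _; have [->//|ne] := eqVneq c' c2.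
    exact: llt_head (Hc2 _ c'C2 ne).
  have inC2 a : a \in C -> a != c1 -> a \in C2 by move=> aC ac; rewrite mem_filter ac.
  have N12 : Jform d c1 c2 = 0.
    have := Q0 (c1 + c2); rewrite linD Qf (sum_two (c := c1) (c' := c2)) //; last 2 first.
    - by rewrite eq_sym.
    - move=> a aC ac1 ac2; case: ifP => // bC; exfalso.
      have h1 := Hc2 _ (inC2 _ aC ac1) ac2.
      have h2 : (c1 + c2 - a = c1) \/ llt (keyfs hv) (c1 + c2 - a) c1.
        by have [->|ne] := eqVneq (c1 + c2 - a) c1; [left|right; apply: Hc1].
      by have := lltD h1 h2; rewrite [a + _]addrC subrK [c2 + c1]addrC llt_irr.
    rewrite [c1 + c2]addrC addrK [c2 + c1]addrC addrK c1C c2C (JformC d c2 c1).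
    move=> h; have {}h := h ltac:(lra).
    apply: FF => //; have -> : Jform d c1 c2 * F c1 * F c2 = 2^-1 * (Jform d c1 c2 * F c1 * F c2 + Jform d c1 c2 * F c2 * F c1).
      by field.
    by rewrite h mulr0.
  have Z : Jform d c1 (c2 + c2 - c1) = 0 by rewrite JformD JformN JformD N12 N1; ring.
  have N2 : Jform d c2 c2 = 0.
    have := Q0 (c2 + c2); rewrite linD Qf (sum_one (c := c2)) //.
    - by rewrite addrK c2C => h; apply: FF => //; apply: h; lra.
    - move=> a aC ac2; case: ifP => // bC.
      have [ea|ac1] := eqVneq a c1; first by rewrite ea Z !mul0r.
      have [eb|bc1] := eqVneq (c2 + c2 - a) c1.
        have ea : a = c2 + c2 - c1 by rewrite -eb opprB addrC subrK.
        by rewrite eb JformC ea Z !mul0r.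
      exfalso.
      have h1 := Hc2 _ (inC2 _ aC ac1) ac2.
      have h2 : (c2 + c2 - a = c2) \/ llt (keyfs hv) (c2 + c2 - a) c2.
        have [->|ne] := eqVneq (c2 + c2 - a) c2; [by left|right].
        by apply: Hc2 => //; apply: inC2.
      by have := lltD h1 h2; rewrite addrC subrK llt_irr.
  have := null_eq dp _ N1 N2 N12; rewrite !Hs // => /(_ erefl) e.
  by move: c21; rewrite e eqxx.
have cc1 : c = c1 by apply: U.
split; first by move=> c' c'C c'l; rewrite cc1; apply: U.
split; first by rewrite /is_null cc1.
apply: (vertex_of (hv := hv)) => // a aC ac.
apply: le_lt_trans cl; rewrite leNgt; apply/negP => al.
by move: ac; rewrite (U _ aC al) -cc1 eqxx.
Qed.
End Lin.

Theorem proposition3p3 (R : realFieldType) (r : nat) (d : 'I_r -> nat)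
    (W : seq 'rV[R]_r) (A : 'rV[R]_r -> R)
    (C : seq 'rV[R]_r) (F : 'rV[R]_r -> R) :
  (2 <= r)%N ->
  (forall i, (0 < d i)%N) ->
  uniq W ->
  (forall w, w \in W ->
     (typeI w /\ 0 < A w) \/ ((typeII w \/ typeIII w) /\ A w < 0)) ->
  conv_dim W r.-1 ->
  uniq C ->
  (forall c, c \in C -> F c != 0) ->
  (* superpotential equation *)
  (forall xi : 'rV[R]_r,
     \sum_(a <- C) \sum_(c <- C | a + c == xi) Jform d a c * F a * F c =
     (if xi - dvec R d \in W then A (xi - dvec R d) else 0)) ->
  (* normalisation: C lies in the hyperplane sum x_i = (n-1)/2 *)
  (forall c, c \in C -> csum c = ((ndim d)%:R - 1) / 2) ->
  (forall (hv : 'rV[R]_r) (lam : R),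
     (forall x, in_conv (halfDW d W) x -> lin hv x < lam) ->
     (forall c1 c2, c1 \in C -> c2 \in C -> lam < lin hv c1 -> lam < lin hv c2 ->
        c1 = c2) /\
     (forall c, c \in C -> lam < lin hv c -> is_null d c /\ is_vertex C c))
  /\
  (forall c, c \in C -> ~ in_conv (halfDW d W) c -> is_null d c /\ is_vertex C c).
Proof.
move=> _ dp uW _ _ uC Fn HS Hs.
have P1 := part1 dp uW uC Fn HS Hs.
split.
  move=> hv lam H; split.
    move=> c1 c2 c1C c2C l1 l2.
    by have [U _] := P1 hv lam H c1 c1C l1; apply/esym/U.
  by move=> c cC cl; have [_ ?] := P1 hv lam H c cC cl.
move=> c cC nc.
have [hv [lam [H1 H2]]] := separate (halfDW_uniq d uW) nc.
by have [_ ?] := P1 hv lam H1 c cC H2.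
Qed.
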